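(* Fix $a\in\mathbb{R}$ and $r>0$, and let $k^{\rm opt}_0=a+\sqrt{a^2+1/r}$. For $T>0$ small enough that $aT<1$, let $k^{\rm opt}_T$ denote the minimizer of $J_T(k)=(1+rk^2)f_{a,T}(k)$ over $k\in(a,k_u(a,T))$. Then $$\lim_{T\to0^+}\frac{k^{\rm opt}_T}{k^{\rm opt}_0-\left(a\,k^{\rm opt}_0+\frac1r\right)T}=1 .$$
   Context: For real $a$ and $T>0$ with $aT<1$, $k_u(a,T)$ is the unique solution $k>|a|$ of $T\sqrt{k^2-a^2}=\arccos(a/k)$; the interval $(a,k_u(a,T))$ is exactly the set of real gains $k$ for which $\dot x(t)=ax(t)-kx(t-T)$ is exponentially stable. For such $k$, $f_{a,T}(k)=\int_{-\infty}^{+\infty}\left|j\omega-a+ke^{-jT\omega}\right|^{-2}d\omega$, the squared $\mathcal H_2$-norm of $1/(s-a+ke^{-Ts})$. $(1+rk^2)f_{a,T}(k)$ is the squared $\mathcal H_2$-norm from $v$ to $z=(x,\sqrt r\,u)$ for $\dot x=ax+u+v$, $u(t)=-kx(t-T)$. Note $k^{\rm opt}_0$ is the optimal gain of the delay-free ($T=0$) problem. *)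

(* Defs.v *)
From Stdlib Require Import Reals Lra ClassicalEpsilon.
From Coquelicot Require Import Coquelicot.
Open Scope R_scope.

(* k_u(a,T): the (unique, by the paper's context) k > |a| with
   T * sqrt(k^2 - a^2) = arccos(a/k); chosen by Hilbert's epsilon. *)
Definition ku_spec (a T k : R) : Prop :=
  Rabs a < k /\ T * sqrt (k ^ 2 - a ^ 2) = acos (a / k).

Definition k_u (a T : R) : R := epsilon (inhabits 0) (ku_spec a T).

(* The complex number  j*w - a + k*e^{-j T w}  (as an element of Coquelicot's C). *)
Definition char_fun (a T k w : R) : C :=
  Cplus (Cminus ((0, w) : C) (RtoC a)) (Cmult (RtoC k) ((cos (T * w), - sin (T * w)) : C)).

Definition f_aT (a T k : R) : R :=
  RInt_gen (fun w => / (Cmod (char_fun a T k w)) ^ 2)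
    (Rbar_locally m_infty) (Rbar_locally p_infty).

Definition J_T (a r T k : R) : R := (1 + r * k ^ 2) * f_aT a T k.

Definition kopt0 (a r : R) : R := a + sqrt (a ^ 2 + / r).

(* Main.v *)
Require Import Defs.
From Stdlib Require Import Reals Lra Psatz Classical ClassicalEpsilon FunctionalExtensionality.
From Coquelicot Require Import Coquelicot.
Open Scope R_scope.

Definition Dg (a T k w : R) : R := (k * cos (T * w) - a) ^ 2 + (w - k * sin (T * w)) ^ 2.

Lemma integrand_eq a T k w : / (Cmod (char_fun a T k w)) ^ 2 = / Dg a T k w.
Proof.
  unfold Cmod. rewrite pow2_sqrt.
  - unfold char_fun, Dg. simpl. f_equal. ring.
  - apply Rplus_le_le_0_compat; apply pow2_ge_0.
Qed.

Lemma PI_gt3 : 3 < PI.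
Proof. pose proof PI2_3_2. lra. Qed.

Lemma sin_le_pos x : 0 <= x -> - x <= sin x <= x.
Proof.
  intros Hx. destruct (Req_dec x 0) as [->|Hn].
  - rewrite sin_0. lra.
  - split.
    + destruct (Rle_dec x PI). pose proof (sin_ge_0 x Hx r). lra.
      pose proof (SIN_bound x). pose proof PI_gt3. lra.
    + pose proof (sin_lt_x x). lra.
Qed.

Lemma abs_sin_le x : Rabs (sin x) <= Rabs x.
Proof.
  destruct (Rle_dec 0 x).
  - pose proof (sin_le_pos x r). rewrite (Rabs_right x) by lra.
    unfold Rabs; destruct Rcase_abs; lra.
  - pose proof (sin_le_pos (-x)). rewrite sin_neg in H.
    rewrite (Rabs_left x) by lra. unfold Rabs; destruct Rcase_abs; lra.
Qed.

Lemma one_minus_cos x : 2 - 2 * cos x <= x ^ 2.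
Proof.
  replace x with (2 * (x/2)) at 1 by field.
  rewrite cos_2a_sin.
  pose proof (abs_sin_le (x/2)).
  assert (sin (x/2) ^ 2 <= (x/2)^2).
  { rewrite <- (pow2_abs (sin _)), <- (pow2_abs (x/2)).
    pose proof (Rabs_pos (sin (x/2))). nra. }
  nra.
Qed.

Lemma Dg_sqrt_bounds a T k w :
  let E := sqrt ((cos (T*w) - 1)^2 + (sin (T*w))^2) in
  sqrt (Dg a T k w) <= sqrt ((k - a)^2 + w^2) + Rabs k * E /\
  sqrt ((k - a)^2 + w^2) <= sqrt (Dg a T k w) + Rabs k * E.
Proof.
  intros E.
  assert (HE : Cmod ((k * (cos (T*w) - 1), - k * sin (T*w)) : C) = Rabs k * E).
  { unfold Cmod, E; cbn [fst snd]. rewrite <- sqrt_Rsqr_abs. rewrite <- sqrt_mult.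
    f_equal. unfold Rsqr. ring. apply Rle_0_sqr.
    apply Rplus_le_le_0_compat; apply pow2_ge_0. }
  pose proof (Cmod_triangle ((k - a, w) : C) ((k * (cos (T*w) - 1), - k * sin (T*w)) : C)) as H1.
  pose proof (Cmod_triangle (((k * cos (T*w) - a), (w - k * sin (T*w))) : C)
                ((- (k * (cos (T*w) - 1)), k * sin (T*w)) : C)) as H2.
  rewrite HE in H1.
  assert (Cmod ((- (k * (cos (T*w) - 1)), k * sin (T*w)) : C) = Rabs k * E).
  { rewrite <- HE. unfold Cmod; cbn [fst snd]. f_equal. ring. }
  rewrite H in H2.
  unfold Cmod, Dg in *; cbn [fst snd Cplus] in *.
  split.
  - replace ((k * cos (T * w) - a) ^ 2 + (w - k * sin (T * w)) ^ 2) with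
      ((k - a + k * (cos (T * w) - 1)) ^ 2 + (w + - k * sin (T * w)) ^ 2) by ring.
    exact H1.
  - replace ((k - a) ^ 2 + w ^ 2) with
      ((k * cos (T * w) - a + - (k * (cos (T * w) - 1))) ^ 2 + (w - k * sin (T * w) + k * sin (T * w)) ^ 2) by ring.
    exact H2.
Qed.

Lemma E_bounds T w : 0 <= T ->
  let E := sqrt ((cos (T*w) - 1)^2 + (sin (T*w))^2) in
  0 <= E /\ E <= T * Rabs w /\ E <= 2.
Proof.
  intros HT E.
  assert (Heq : (cos (T*w) - 1)^2 + (sin (T*w))^2 = 2 - 2 * cos (T*w)).
  { pose proof (sin2_cos2 (T*w)). unfold Rsqr in H. nra. }
  unfold E; rewrite Heq.
  pose proof (COS_bound (T*w)).
  split; [apply sqrt_pos|split].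
  - rewrite <- (sqrt_pow2 (T * Rabs w)).
    apply sqrt_le_1_alt. pose proof (one_minus_cos (T*w)).
    rewrite <- (pow2_abs (T*w)) in H0. rewrite Rabs_mult, (Rabs_right T) in H0 by lra. lra.
    pose proof (Rabs_pos w); nra.
  - assert (H4 : sqrt 4 = 2) by (replace 4 with (2*2) by ring; apply sqrt_square; lra).
    apply Rle_trans with (sqrt 4); [apply sqrt_le_1_alt; lra | lra].
Qed.

Lemma sqrt_le_sq X Y : 0 <= X -> sqrt X <= Y -> X <= Y ^ 2.
Proof. intros HX H. pose proof (sqrt_pos X). rewrite <- (pow2_sqrt X) by lra. nra. Qed.

Lemma sq_le_sqrt X Y : 0 <= X -> 0 <= Y -> Y <= sqrt X -> Y ^ 2 <= X.
Proof. intros HX HY H. rewrite <- (pow2_sqrt X) by lra. nra. Qed.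

Lemma abs_le_rho c w : Rabs w <= sqrt (c^2 + w^2).
Proof.
  rewrite <- (sqrt_pow2 (Rabs w)) by apply Rabs_pos. apply sqrt_le_1_alt.
  rewrite pow2_abs. pose proof (pow2_ge_0 c). lra.
Qed.

Lemma Dg_nonneg a T k w : 0 <= Dg a T k w.
Proof. unfold Dg. apply Rplus_le_le_0_compat; apply pow2_ge_0. Qed.

Lemma Dg_B1 a T k w : 0 <= T -> Dg a T k w <= (1 + Rabs k * T) ^ 2 * ((k - a)^2 + w^2).
Proof.
  intros HT. destruct (Dg_sqrt_bounds a T k w) as [H1 _].
  destruct (E_bounds T w HT) as [E0 [E1 E2]].
  set (E := sqrt ((cos (T*w) - 1)^2 + (sin (T*w))^2)) in *.
  pose proof (abs_le_rho (k-a) w). set (rho := sqrt ((k - a) ^ 2 + w ^ 2)) in *.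
  pose proof (Rabs_pos k). pose proof (Rabs_pos w).
  assert (Rabs k * E <= Rabs k * (T * Rabs w)) by (apply Rmult_le_compat_l; lra).
  assert (Rabs k * T * Rabs w <= Rabs k * T * rho) by (apply Rmult_le_compat_l; nra).
  assert (sqrt (Dg a T k w) <= (1 + Rabs k * T) * rho) by nra.
  apply sqrt_le_sq in H5; [|apply Dg_nonneg].
  replace ((k - a)^2 + w^2) with (rho ^ 2). nra.
  unfold rho. rewrite pow2_sqrt; [ring|]. pose proof (pow2_ge_0 (k-a)); pose proof (pow2_ge_0 w); lra.
Qed.

Lemma Dg_B2 a T k w : 0 <= T -> Rabs k * T <= 1 ->
  (1 - Rabs k * T) ^ 2 * ((k - a)^2 + w^2) <= Dg a T k w.
Proof.
  intros HT Hk. destruct (Dg_sqrt_bounds a T k w) as [_ H1].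
  destruct (E_bounds T w HT) as [E0 [E1 E2]].
  set (E := sqrt ((cos (T*w) - 1)^2 + (sin (T*w))^2)) in *.
  pose proof (abs_le_rho (k-a) w). set (rho := sqrt ((k - a) ^ 2 + w ^ 2)) in *.
  pose proof (Rabs_pos k). pose proof (Rabs_pos w).
  assert (Rabs k * E <= Rabs k * (T * Rabs w)) by (apply Rmult_le_compat_l; lra).
  assert (Rabs k * T * Rabs w <= Rabs k * T * rho) by (apply Rmult_le_compat_l; nra).
  assert ((1 - Rabs k * T) * rho <= sqrt (Dg a T k w)) by nra.
  apply sq_le_sqrt in H5; [|apply Dg_nonneg| pose proof (sqrt_pos ((k - a) ^ 2 + w ^ 2)); unfold rho; nra].
  replace ((k - a)^2 + w^2) with (rho ^ 2). nra.
  unfold rho. rewrite pow2_sqrt; [ring|]. pose proof (pow2_ge_0 (k-a)); pose proof (pow2_ge_0 w); lra.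
Qed.

Lemma Dg_B3 a T k w : 0 <= T -> Dg a T k w <= 2 * ((k - a)^2 + 4 * k ^ 2 + w^2).
Proof.
  intros HT. destruct (Dg_sqrt_bounds a T k w) as [H1 _].
  destruct (E_bounds T w HT) as [E0 [E1 E2]].
  set (E := sqrt ((cos (T*w) - 1)^2 + (sin (T*w))^2)) in *.
  set (rho := sqrt ((k - a) ^ 2 + w ^ 2)) in *.
  pose proof (Rabs_pos k). pose proof (sqrt_pos ((k - a) ^ 2 + w ^ 2)).
  assert (sqrt (Dg a T k w) <= rho + 2 * Rabs k) by nra.
  apply sqrt_le_sq in H2; [|apply Dg_nonneg].
  assert (rho ^ 2 = (k - a)^2 + w^2).
  { unfold rho. rewrite pow2_sqrt; [ring|]. pose proof (pow2_ge_0 (k-a)); pose proof (pow2_ge_0 w); lra. }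
  assert ((rho + 2 * Rabs k)^2 <= 2 * rho^2 + 8 * Rabs k ^ 2).
  { pose proof (pow2_ge_0 (rho - 2 * Rabs k)). nra. }
  rewrite <- (pow2_abs k). lra.
Qed.

Lemma Dg_B4 a T k w : Rabs k <= Rabs w -> (Rabs w - Rabs k) ^ 2 <= Dg a T k w.
Proof.
  intros H. unfold Dg.
  assert (Rabs (k * sin (T*w)) <= Rabs k).
  { rewrite Rabs_mult. pose proof (SIN_bound (T*w)). pose proof (Rabs_pos k).
    assert (Rabs (sin (T*w)) <= 1) by (unfold Rabs; destruct Rcase_abs; lra). nra. }
  pose proof (Rabs_triang_inv w (k * sin (T*w))).
  assert ((Rabs w - Rabs k) ^ 2 <= (w - k * sin (T * w)) ^ 2).
  { rewrite <- (pow2_abs (w - _)). nra. }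
  pose proof (pow2_ge_0 (k * cos (T * w) - a)). lra.
Qed.

Lemma atan_lim_p : is_lim atan p_infty (PI/2).
Proof.
  assert (H1 : is_lim (fun x => / x) p_infty 0).
  { replace (Finite 0) with (Rbar_inv p_infty) by reflexivity.
    apply is_lim_inv. apply is_lim_id. discriminate. }
  assert (H2 : is_lim (fun x => atan (/ x)) p_infty (atan 0)).
  { apply is_lim_comp_continuous; auto. apply continuous_atan_comp. apply continuous_id. }
  rewrite atan_0 in H2.
  assert (H3 : is_lim (fun x => PI/2 - atan (/ x)) p_infty (PI/2 - 0)).
  { apply (is_lim_minus (fun _ => PI/2) _ p_infty (PI/2) 0). apply is_lim_const. exact H2.
    simpl. reflexivity. }
  rewrite Rminus_0_r in H3.
  eapply is_lim_ext_loc; [|exact H3].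
  exists 0. intros y Hy. rewrite atan_inv by lra. ring.
Qed.

Lemma atan_lim_m : is_lim atan m_infty (-(PI/2)).
Proof.
  assert (H1 : is_lim (fun x => / x) m_infty 0).
  { replace (Finite 0) with (Rbar_inv m_infty) by reflexivity.
    apply is_lim_inv. apply is_lim_id. discriminate. }
  assert (H2 : is_lim (fun x => atan (/ x)) m_infty (atan 0)).
  { apply is_lim_comp_continuous; auto. apply continuous_atan_comp. apply continuous_id. }
  rewrite atan_0 in H2.
  assert (H3 : is_lim (fun x => -(PI/2) - atan (/ x)) m_infty (-(PI/2) - 0)).
  { apply (is_lim_minus (fun _ => -(PI/2)) _ m_infty (-(PI/2)) 0). apply is_lim_const. exact H2.
    simpl. reflexivity. }
  rewrite Rminus_0_r in H3.
  eapply is_lim_ext_loc; [|exact H3].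
  exists 0. intros y Hy. simpl.
  pose proof (atan_inv (-y) ltac:(lra)) as E. rewrite Rinv_opp, atan_opp, atan_opp in E. lra.
Qed.

Lemma Rbar_mult_pinf_pos x : 0 < x -> Rbar_mult p_infty (Finite x) = p_infty.
Proof. intros H. simpl. case Rle_dec; intros; [|lra]. case Rle_lt_or_eq_dec; intros; auto; lra. Qed.
Lemma Rbar_mult_minf_pos x : 0 < x -> Rbar_mult m_infty (Finite x) = m_infty.
Proof. intros H. simpl. case Rle_dec; intros; [|lra]. case Rle_lt_or_eq_dec; intros; auto; lra. Qed.

Lemma int_inv_sq b : 0 < b ->
  is_RInt_gen (fun w => / (w ^ 2 + b ^ 2)) (Rbar_locally m_infty) (Rbar_locally p_infty) (PI / b).
Proof.
  intros Hb.
  set (F := fun w => atan (w / b) / b).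
  assert (HD : forall w, is_derive F w (/ (w ^ 2 + b ^ 2))).
  { intros w. unfold F. auto_derive; auto.
    field. repeat split; try lra; nra. }
  assert (Hlp : is_lim F p_infty (PI/2 / b)).
  { unfold F. apply (is_lim_scal_r (fun w => atan (w / b)) (/ b) p_infty (PI/2)).
    eapply is_lim_comp. apply atan_lim_p.
    pose proof (is_lim_scal_r (fun w => w) (/ b) p_infty p_infty (is_lim_id _)) as HH.
    rewrite (Rbar_mult_pinf_pos (/ b)) in HH by (apply Rinv_0_lt_compat; lra).
    exact HH.
    exists 0; intros; discriminate. }
  assert (Hlm : is_lim F m_infty (-(PI/2) / b)).
  { unfold F. apply (is_lim_scal_r (fun w => atan (w / b)) (/ b) m_infty (-(PI/2))).
    eapply is_lim_comp. apply atan_lim_m.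
    pose proof (is_lim_scal_r (fun w => w) (/ b) m_infty m_infty (is_lim_id _)) as HH.
    rewrite (Rbar_mult_minf_pos (/ b)) in HH by (apply Rinv_0_lt_compat; lra).
    exact HH.
    exists 0; intros; discriminate. }
  replace (PI / b) with (PI/2/b - (-(PI/2)/b)) by (field; lra).
  apply (is_RInt_gen_ext (Derive F)).
  - apply filter_forall. intros [x y] z _. simpl. apply is_derive_unique, HD.
  - apply is_RInt_gen_Derive.
    + apply filter_forall. intros [x y] z _. eexists; apply HD.
    + apply filter_forall. intros [x y] z _.
      apply (continuous_ext (fun w => / (w ^ 2 + b ^ 2))).
      intros; symmetry; apply is_derive_unique, HD.
      apply continuous_Rinv_comp. 
      apply (continuous_plus (fun w => w^2) (fun _ => b^2)).
      apply (continuous_mult (fun w => w) (fun w => w^1)). apply continuous_id.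
      apply (continuous_mult (fun w => w) (fun w => 1)). apply continuous_id. apply continuous_const.
      apply continuous_const. nra.
    + exact Hlm.
    + exact Hlp.
Qed.

Lemma ball_R_intro (x y eps : R) : Rabs (y - x) < eps -> ball x eps y.
Proof. intros H. exact H. Qed.

Section EX.
Variable f : R -> R.
Variable C : R.
Hypothesis fcont : forall x, continuous f x.
Hypothesis fpos : forall x, 0 <= f x.
Hypothesis fbound : forall x, f x <= C / (x ^ 2 + 1).

Let g := fun x => C / (x ^ 2 + 1).

Lemma g_cont x : continuous g x.
Proof.
  unfold g. apply (continuous_mult (fun _ => C) (fun x => / (x^2+1))). apply continuous_const.
  apply continuous_Rinv_comp.
  apply (continuous_plus (fun w => w^2) (fun _ => 1)).
  apply (continuous_mult (fun w => w) (fun w => w^1)). apply continuous_id.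
  apply (continuous_mult (fun w => w) (fun w => 1)). apply continuous_id. apply continuous_const.
  apply continuous_const. nra.
Qed.

Lemma g_int a b : is_RInt g a b (C * atan b - C * atan a).
Proof.
  apply (is_RInt_derive (fun x => C * atan x)).
  - intros x _. unfold g. auto_derive; auto. field. nra.
  - intros x _. apply g_cont.
Qed.

Lemma exf a b : ex_RInt f a b.
Proof. apply (ex_RInt_continuous (V:=R_CompleteNormedModule)). intros; apply fcont. Qed.

Lemma exg a b : ex_RInt g a b.
Proof. eexists; apply g_int. Qed.

Lemma C_nonneg : 0 <= C.
Proof. pose proof (fbound 0). pose proof (fpos 0). replace (0^2+1) with 1 in H by ring. lra. Qed.

Lemma Rint_f_le a b : a <= b -> RInt f a b <= C * atan b - C * atan a.
Proof.
  intros H. rewrite <- (is_RInt_unique g a b _ (g_int a b)).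
  apply RInt_le; auto using exf, exg.
Qed.

Lemma ex_right : ex_RInt_gen f (at_point 0) (Rbar_locally p_infty).
Proof.
  set (E := fun v => exists b, 0 <= b /\ v = RInt f 0 b).
  assert (HB : bound E).
  { exists (C * (PI/2)). intros v [b [Hb ->]]. pose proof (Rint_f_le 0 b Hb).
    pose proof (atan_bound b). rewrite atan_0 in H. pose proof C_nonneg. nra. }
  assert (HE : exists x, E x) by (exists (RInt f 0 0); exists 0; split; auto; lra).
  destruct (completeness E HB HE) as [l [Hub Hlub]].
  exists l. intros P [eps HP].
  assert (Hmono : forall b b', 0 <= b -> b <= b' -> RInt f 0 b <= RInt f 0 b').
  { intros b b' H1 H2. rewrite <- (RInt_Chasles f 0 b b') by apply exf.
    pose proof (RInt_ge_0 f b b' H2 (exf _ _) (fun x _ => fpos x)).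
    change (RInt f 0 b <= RInt f 0 b + RInt f b b'). lra. }
  assert (Hex : exists b0, 0 <= b0 /\ l - eps < RInt f 0 b0).
  { apply NNPP. intros Hn.
    assert (is_upper_bound E (l - eps)).
    { intros v [b [Hb ->]]. apply Rnot_lt_le. intros Hc. apply Hn. exists b; auto. }
    apply Hlub in H. destruct eps; simpl in *; lra. }
  destruct Hex as [b0 [Hb0 Hl0]].
  apply (Filter_prod _ _ _ (fun x => x = 0) (fun y => b0 < y)).
  - reflexivity.
  - exists b0. auto.
  - intros x y -> Hy. exists (RInt f 0 y). split.
    + apply (RInt_correct (V:=R_CompleteNormedModule)), exf.
    + apply HP. apply ball_R_intro.
      assert (RInt f 0 y <= l) by (apply Hub; exists y; split; lra).
      pose proof (Hmono b0 y Hb0 ltac:(lra)).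
      unfold Rabs; destruct Rcase_abs; destruct eps; simpl in *; lra.
Qed.

Lemma ex_left : ex_RInt_gen f (Rbar_locally m_infty) (at_point 0).
Proof.
  set (E := fun v => exists a, a <= 0 /\ v = RInt f a 0).
  assert (HB : bound E).
  { exists (C * (PI/2)). intros v [a [Ha ->]]. pose proof (Rint_f_le a 0 Ha).
    pose proof (atan_bound a). rewrite atan_0 in H. pose proof C_nonneg. nra. }
  assert (HE : exists x, E x) by (exists (RInt f 0 0); exists 0; split; auto; lra).
  destruct (completeness E HB HE) as [l [Hub Hlub]].
  exists l. intros P [eps HP].
  assert (Hmono : forall a a', a' <= a -> a <= 0 -> RInt f a 0 <= RInt f a' 0).
  { intros a a' H1 H2. rewrite <- (RInt_Chasles f a' a 0) by apply exf.
    pose proof (RInt_ge_0 f a' a H1 (exf _ _) (fun x _ => fpos x)).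
    change (RInt f a 0 <= RInt f a' a + RInt f a 0). lra. }
  assert (Hex : exists a0, a0 <= 0 /\ l - eps < RInt f a0 0).
  { apply NNPP. intros Hn.
    assert (is_upper_bound E (l - eps)).
    { intros v [b [Hb ->]]. apply Rnot_lt_le. intros Hc. apply Hn. exists b; auto. }
    apply Hlub in H. destruct eps; simpl in *; lra. }
  destruct Hex as [a0 [Ha0 Hl0]].
  apply (Filter_prod _ _ _ (fun x => x < a0) (fun y => y = 0)).
  - exists a0. auto.
  - reflexivity.
  - intros x y Hx ->. exists (RInt f x 0). split.
    + apply (RInt_correct (V:=R_CompleteNormedModule)), exf.
    + apply HP. apply ball_R_intro.
      assert (RInt f x 0 <= l) by (apply Hub; exists x; split; lra).
      pose proof (Hmono a0 x ltac:(lra) Ha0).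
      unfold Rabs; destruct Rcase_abs; destruct eps; simpl in *; lra.
Qed.

Lemma ex_full : ex_RInt_gen f (Rbar_locally m_infty) (Rbar_locally p_infty).
Proof. apply (ex_RInt_gen_Chasles f 0). apply ex_left. apply ex_right. Qed.

End EX.

Lemma Dg_cont a T k w : continuous (Dg a T k) w.
Proof. apply (ex_derive_continuous (K:=R_AbsRing) (V:=R_NormedModule)). unfold Dg. auto_derive. auto. Qed.

Lemma I_cont a T k w : 0 < Dg a T k w -> continuous (fun w => / Dg a T k w) w.
Proof. intros H. apply continuous_Rinv_comp. apply Dg_cont. lra. Qed.

Lemma I_bound a T k : (forall w, 0 < Dg a T k w) ->
  exists C, forall w, / Dg a T k w <= C / (w ^ 2 + 1).
Proof.
  intros Hpos. set (L := 2 * Rabs k + 1).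
  destruct (continuity_ab_min (Dg a T k) (-L) L) as [wm [Hm _]].
  { pose proof (Rabs_pos k). unfold L. lra. }
  { intros c _. apply continuity_pt_filterlim. apply Dg_cont. }
  set (m := Dg a T k wm). assert (Hm0 : 0 < m) by apply Hpos.
  exists (4 + (L^2 + 1) / m). intros w.
  assert (Hw1 : 0 < w^2 + 1) by nra.
  pose proof (Hpos w) as Hd.
  destruct (Rle_dec (Rabs w) L) as [HL|HL].
  - assert (Hw : -L <= w <= L) by (unfold Rabs in HL; destruct Rcase_abs; lra).
    specialize (Hm w Hw). fold m in Hm.
    assert (/ Dg a T k w <= / m) by (apply Rinv_le_contravar; lra).
    assert (w^2 <= L^2) by (rewrite <- (pow2_abs w); pose proof (Rabs_pos w); nra).
    assert (/ m <= (L^2+1)/m / (w^2+1)).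
    { unfold Rdiv. rewrite Rmult_assoc. apply Rmult_le_reg_l with m; auto.
      field_simplify; try lra. apply Rcomplements.Rle_div_r; lra. }
    assert (0 <= 4 / (w^2+1)) by (apply Rcomplements.Rdiv_le_0_compat; lra).
    replace ((4 + (L ^ 2 + 1) / m) / (w ^ 2 + 1)) with (4/(w^2+1) + (L^2+1)/m/(w^2+1)) by (field; lra).
    lra.
  - pose proof (Dg_B4 a T k w) as HB. pose proof (Rabs_pos k). unfold L in HL.
    assert (HB' : (Rabs w - Rabs k)^2 <= Dg a T k w) by (apply HB; lra).
    assert (Hq : (w^2+1)/4 <= (Rabs w - Rabs k)^2).
    { rewrite <- (pow2_abs w). nra. }
    assert (/ Dg a T k w <= 4 / (w^2+1)).
    { replace (4 / (w^2+1)) with (/ ((w^2+1)/4)) by (field; lra).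
      apply Rinv_le_contravar; lra. }
    assert (0 <= (L^2+1)/m/(w^2+1)).
    { apply Rcomplements.Rdiv_le_0_compat; [apply Rcomplements.Rdiv_le_0_compat|]; nra. }
    replace ((4 + (L ^ 2 + 1) / m) / (w ^ 2 + 1)) with (4/(w^2+1) + (L^2+1)/m/(w^2+1)) by (field; lra).
    lra.
Qed.


Lemma f_correct a T k : (forall w, 0 < Dg a T k w) ->
  is_RInt_gen (fun w => / Dg a T k w) (Rbar_locally m_infty) (Rbar_locally p_infty) (f_aT a T k).
Proof.
  intros Hpos. unfold f_aT.
  replace (fun w => / Cmod (char_fun a T k w) ^ 2) with (fun w => / Dg a T k w)
    by (apply functional_extensionality; intros; symmetry; apply integrand_eq).
  apply (RInt_gen_correct (V:=R_CompleteNormedModule)).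
  destruct (I_bound a T k Hpos) as [C HC].
  apply (ex_full _ C).
  - intros w. apply I_cont, Hpos.
  - intros w. left. apply Rinv_0_lt_compat, Hpos.
  - exact HC.
Qed.

Lemma ref_int M b : 0 < M -> 0 < b ->
  is_RInt_gen (fun w => / (M * (w ^ 2 + b ^ 2))) (Rbar_locally m_infty) (Rbar_locally p_infty) (PI / (M * b)).
Proof.
  intros HM Hb.
  pose proof (is_RInt_gen_scal (V:=R_NormedModule) _ (/ M) _ (int_inv_sq b Hb)) as H.
  replace (PI / (M * b)) with (scal (/ M) (PI / b)).
  2:{ unfold scal; simpl; unfold mult; simpl. field; lra. }
  eapply is_RInt_gen_ext; [|exact H].
  apply filter_forall. intros [x y] z _. unfold scal; simpl; unfold mult; simpl.
  field. split; [nra|lra].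
Qed.

Lemma cmp_le (f g : R -> R) lf lg :
  (forall w, 0 <= f w <= g w) ->
  is_RInt_gen f (Rbar_locally m_infty) (Rbar_locally p_infty) lf ->
  is_RInt_gen g (Rbar_locally m_infty) (Rbar_locally p_infty) lg -> lf <= lg.
Proof.
  intros H Hf Hg.
  assert (norm lf <= lg).
  { apply (RInt_gen_norm (V:=R_CompleteNormedModule) (Fa:=Rbar_locally m_infty) (Fb:=Rbar_locally p_infty) f g lf lg); auto.
    - apply (Filter_prod _ _ _ (fun x => x < 0) (fun y => 0 < y)).
      simpl; exists 0; auto. simpl; exists 0; auto. simpl; intros; lra.
    - apply filter_forall. intros [x y] z _. simpl.
      change (Rabs (f z) <= g z). rewrite Rabs_right. apply H. apply Rle_ge, H. }
  change (Rabs lf <= lg) in H0. unfold Rabs in H0; destruct Rcase_abs; lra.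
Qed.

Lemma f_lower1 a T k : 0 <= T -> a < k -> (forall w, 0 < Dg a T k w) ->
  PI / ((1 + Rabs k * T) ^ 2 * (k - a)) <= f_aT a T k.
Proof.
  intros HT Hk Hpos.
  pose proof (Rabs_pos k).
  assert (HM : 0 < (1 + Rabs k * T) ^ 2) by nra.
  apply (cmp_le (fun w => / ((1 + Rabs k * T) ^ 2 * (w ^ 2 + (k - a) ^ 2))) (fun w => / Dg a T k w)).
  - intros w. pose proof (Hpos w). split.
    + left. apply Rinv_0_lt_compat. apply Rmult_lt_0_compat; [lra|]. pose proof (pow2_ge_0 w). nra.
    + apply Rinv_le_contravar; auto. pose proof (Dg_B1 a T k w HT). rewrite (Rplus_comm (w^2)). lra.
  - apply ref_int; lra.
  - apply f_correct; auto.
Qed.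

Lemma f_lower2 a T k : 0 <= T -> a < k -> (forall w, 0 < Dg a T k w) ->
  PI / (2 * sqrt ((k - a) ^ 2 + 4 * k ^ 2)) <= f_aT a T k.
Proof.
  intros HT Hk Hpos.
  assert (Hb : 0 < sqrt ((k - a) ^ 2 + 4 * k ^ 2)) by (apply sqrt_lt_R0; nra).
  apply (cmp_le (fun w => / (2 * (w ^ 2 + sqrt ((k - a) ^ 2 + 4 * k ^ 2) ^ 2))) (fun w => / Dg a T k w)).
  - intros w. pose proof (Hpos w). split.
    + left. apply Rinv_0_lt_compat. apply Rmult_lt_0_compat; [lra|]. pose proof (pow2_ge_0 w). nra.
    + apply Rinv_le_contravar; auto. pose proof (Dg_B3 a T k w HT).
      rewrite pow2_sqrt by nra. nra.
  - apply ref_int; lra.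
  - apply f_correct; auto.
Qed.

Lemma f_upper a T k : 0 <= T -> a < k -> Rabs k * T < 1 ->
  f_aT a T k <= PI / ((1 - Rabs k * T) ^ 2 * (k - a)).
Proof.
  intros HT Hk HkT.
  pose proof (Rabs_pos k).
  assert (HM : 0 < (1 - Rabs k * T) ^ 2) by nra.
  assert (Hpos : forall w, 0 < Dg a T k w).
  { intros w. pose proof (Dg_B2 a T k w HT ltac:(lra)).
    assert (0 < (k - a)^2 + w^2) by (pose proof (pow2_ge_0 w); nra).
    pose proof (Rmult_lt_0_compat _ _ HM H1). lra. }
  apply (cmp_le (fun w => / Dg a T k w) (fun w => / ((1 - Rabs k * T) ^ 2 * (w ^ 2 + (k - a) ^ 2)))).
  - intros w. pose proof (Hpos w). split.
    + left. apply Rinv_0_lt_compat. lra.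
    + apply Rinv_le_contravar. { apply Rmult_lt_0_compat; [lra|]. pose proof (pow2_ge_0 w). nra. } pose proof (Dg_B2 a T k w HT ltac:(lra)). rewrite (Rplus_comm (w^2)). lra.
  - apply f_correct; auto.
  - apply ref_int; lra.
Qed.

Lemma acos_decr x y : -1 <= x -> x < y -> y <= 1 -> acos y < acos x.
Proof.
  intros H1 H2 H3. pose proof (acos_bound x). pose proof (acos_bound y).
  apply (cos_decreasing_0 (acos x) (acos y)); try lra.
  rewrite !cos_acos; lra.
Qed.

Lemma acos_decr_le x y : -1 <= x -> x <= y -> y <= 1 -> acos y <= acos x.
Proof.
  intros H1 H2 H3. destruct (Req_dec x y). subst; lra. left; apply acos_decr; lra.
Qed.

Lemma sqrt_k_sin a k : Rabs a < k -> sqrt (k ^ 2 - a ^ 2) = k * sin (acos (a / k)).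
Proof.
  intros H. pose proof (Rabs_pos a).
  assert (Hx : -1 <= a / k <= 1).
  { split; [apply Rcomplements.Rle_div_r|apply Rcomplements.Rle_div_l]; try lra;
    unfold Rabs in H; destruct Rcase_abs; lra. }
  rewrite sin_acos by auto.
  rewrite <- (sqrt_pow2 k) at 2 by lra. rewrite <- sqrt_mult by (try nra; unfold Rsqr;
    assert ((a/k)*(a/k) <= 1) by (pose proof (pow2_abs a); nra); lra).
  f_equal. unfold Rsqr. field. lra.
Qed.

Lemma h_incr x y : 0 < x -> x < y -> y < PI / 2 ->
  sin x / (x * cos x) < sin y / (y * cos y).
Proof.
  intros Hx Hxy Hy.
  set (h := fun t => sin t / (t * cos t)).
  set (h' := fun t => (t - sin t * cos t) / (t * cos t) ^ 2).
  destruct (MVT_cor2 h h' x y Hxy) as [c [Hc2 Hc]].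
  - intros c Hc. assert (0 < cos c) by (apply cos_gt_0; lra).
    apply is_derive_Reals. unfold h, h'. auto_derive.
    + intro Hz. assert (0 < c * cos c) by (apply Rmult_lt_0_compat; lra). lra.
    + assert (Hnz : c * cos c <> 0) by (assert (0 < c * cos c) by (apply Rmult_lt_0_compat; lra); lra).
      assert (E : sin c ^ 2 + cos c ^ 2 = 1) by (pose proof (sin2_cos2 c); unfold Rsqr in *; nra).
      replace (c - sin c * cos c) with (c * (sin c ^ 2 + cos c ^ 2) - sin c * cos c) by (rewrite E; ring).
      field. split; lra.
  - assert (0 < cos c) by (apply cos_gt_0; lra).
    assert (sin c * cos c < c).
    { pose proof (sin_lt_x (2 * c) ltac:(lra)) as Hs. rewrite sin_2a in Hs. lra. }
    assert (0 < h' c).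
    { unfold h'. apply Rdiv_lt_0_compat. lra. apply pow_lt. nra. }
    assert (0 < h' c * (y - x)) by (apply Rmult_lt_0_compat; lra).
    unfold h in Hc2. lra.
Qed.

Definition gk a T k := T * sqrt (k ^ 2 - a ^ 2) - acos (a / k).

Lemma div_range a k : Rabs a < k -> -1 < a / k < 1.
Proof.
  intros H. pose proof (Rabs_pos a).
  split; [apply Rcomplements.Rlt_div_r|apply Rcomplements.Rlt_div_l]; try lra;
    unfold Rabs in H; destruct Rcase_abs; lra.
Qed.

Lemma gk_theta a T k : 0 < a -> a < k ->
  let th := acos (a / k) in
  0 < th < PI / 2 /\ T * sqrt (k ^ 2 - a ^ 2) = a * T * th * (sin th / (th * cos th)).
Proof.
  intros Ha Hk th.
  assert (Hak : Rabs a < k) by (rewrite Rabs_right; lra).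
  destruct (div_range a k Hak) as [H1 H2].
  assert (Hpos : 0 < a / k) by (apply Rdiv_lt_0_compat; lra).
  assert (Hth : 0 < th < PI / 2).
  { split. apply acos_bound_lt; lra. rewrite <- acos_0. apply acos_decr; lra. }
  split; auto.
  assert (Hc : cos th = a / k) by (apply cos_acos; lra).
  assert (0 < cos th) by lra.
  rewrite sqrt_k_sin by auto. fold th.
  replace k with (a / cos th) at 1 by (rewrite Hc; field; lra).
  field. lra.
Qed.

Lemma g_mono a T k1 k2 : 0 < T -> a * T < 1 -> Rabs a < k1 -> k1 < k2 ->
  0 <= gk a T k1 -> 0 < gk a T k2.
Proof.
  intros HT HaT H1 H12 Hg. unfold gk in *.
  pose proof (Rabs_pos a).
  destruct (div_range a k1 H1). destruct (div_range a k2 ltac:(lra)).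
  destruct (Rle_dec a 0) as [Ha|Ha].
  - assert (sqrt (k1 ^ 2 - a ^ 2) < sqrt (k2 ^ 2 - a ^ 2)).
    { apply sqrt_lt_1_alt. rewrite <- (pow2_abs a). split; nra. }
    assert (a / k1 <= a / k2).
    { unfold Rdiv. apply Rmult_le_compat_neg_l; auto. apply Rinv_le_contravar; lra. }
    pose proof (acos_decr_le (a/k1) (a/k2) ltac:(lra) H6 ltac:(lra)).
    nra.
  - assert (Ha' : 0 < a) by lra.
    destruct (gk_theta a T k1 Ha' ltac:(rewrite Rabs_right in H1; lra)) as [Th1 E1].
    destruct (gk_theta a T k2 Ha' ltac:(rewrite Rabs_right in H1; lra)) as [Th2 E2].
    rewrite E1 in Hg. rewrite E2.
    set (t1 := acos (a / k1)) in *. set (t2 := acos (a / k2)) in *.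
    assert (a / k2 < a / k1).
    { unfold Rdiv. apply Rmult_lt_compat_l; auto. apply Rinv_lt_contravar; nra. }
    assert (t1 < t2) by (apply acos_decr; lra).
    pose proof (h_incr t1 t2 ltac:(lra) H6 ltac:(lra)).
    set (h1 := sin t1 / (t1 * cos t1)) in *. set (h2 := sin t2 / (t2 * cos t2)) in *.
    assert (1 <= a * T * h1).
    { assert (0 <= t1 * (a * T * h1 - 1)) by nra.
      destruct (Rle_dec 1 (a * T * h1)); auto. nra. }
    assert (0 < a * T) by nra.
    assert (a * T * h1 < a * T * h2) by (apply Rmult_lt_compat_l; auto).
    assert (0 < t2 * (a * T * h2 - 1)) by (apply Rmult_lt_0_compat; lra).
    lra.
Qed.

Lemma gk_cont a T k : Rabs a < k -> continuity_pt (gk a T) k.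
Proof.
  intros Hk. pose proof (Rabs_pos a).
  apply continuity_pt_filterlim. unfold gk.
  apply (continuous_minus (fun k => T * sqrt (k ^ 2 - a ^ 2)) (fun k => acos (a / k))).
  - apply (continuous_scal_r T (fun k => sqrt (k ^ 2 - a ^ 2))).
    apply continuous_sqrt_comp. apply (ex_derive_continuous (K:=R_AbsRing) (V:=R_NormedModule)).
    auto_derive. auto.
  - apply (continuous_comp (fun k => a / k) acos).
    + apply (ex_derive_continuous (K:=R_AbsRing) (V:=R_NormedModule)). auto_derive. lra.
    + apply continuity_pt_filterlim. apply derivable_continuous_pt. apply derivable_pt_acos.
      apply div_range; auto.
Qed.

Lemma ku_exists a T : 0 < T -> a * T < 1 -> exists k, ku_spec a T k.
Proof.
  intros HT HaT. pose proof (Rabs_pos a).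
  assert (Hk1 : exists k1, Rabs a < k1 /\ gk a T k1 < 0).
  { destruct (Rle_dec a 0) as [Ha|Ha].
    - exists (sqrt (a ^ 2 + (/ T) ^ 2)).
      assert (Hgt : Rabs a < sqrt (a ^ 2 + (/ T) ^ 2)).
      { rewrite <- (sqrt_pow2 (Rabs a)) by lra. apply sqrt_lt_1_alt. rewrite pow2_abs.
        split. apply pow2_ge_0. assert (0 < / T) by (apply Rinv_0_lt_compat; lra). nra. }
      split; auto. unfold gk.
      rewrite pow2_sqrt by (pose proof (pow2_ge_0 a); pose proof (pow2_ge_0 (/T)); lra).
      replace (a ^ 2 + (/ T) ^ 2 - a ^ 2) with ((/ T) ^ 2) by ring.
      rewrite sqrt_pow2 by (left; apply Rinv_0_lt_compat; lra).
      destruct (div_range a _ Hgt).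
      assert (a / sqrt (a ^ 2 + (/ T) ^ 2) <= 0).
      { unfold Rdiv. apply Rmult_le_0_r; auto. left. apply Rinv_0_lt_compat. lra. }
      pose proof (acos_decr_le (a / sqrt (a ^ 2 + (/ T) ^ 2)) 0 ltac:(lra) H2 ltac:(lra)). rewrite acos_0 in H3.
      rewrite Rinv_r by lra. pose proof PI_gt3. lra.
    - set (k1 := 2 * a / (1 + a * T)).
      assert (Hak : a < k1).
      { unfold k1. apply Rcomplements.Rlt_div_r. nra. nra. }
      exists k1. split. rewrite Rabs_right; lra.
      destruct (gk_theta a T k1 ltac:(lra) Hak) as [Hth E].
      set (th := acos (a / k1)) in *.
      unfold gk. fold th.
      assert (Hc : cos th = a / k1) by (apply cos_acos; destruct (div_range a k1 ltac:(rewrite Rabs_right; lra)); lra).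
      rewrite sqrt_k_sin by (rewrite Rabs_right; lra). fold th.
      pose proof (sin_lt_x th ltac:(lra)).
      assert (0 < sin th) by (apply sin_gt_0; lra).
      assert (T * k1 < 1).
      { assert (E2 : T * k1 * (1 + a * T) = 2 * a * T) by (unfold k1; field; nra).
        apply (Rmult_lt_reg_r (1 + a * T)). nra. rewrite E2. nra. }
      assert (0 < T * k1) by (apply Rmult_lt_0_compat; lra).
      assert (T * k1 * sin th < th) by nra.
      lra. }
  destruct Hk1 as [k1 [Hk1 Hg1]].
  set (k2 := k1 + Rabs a + PI / T + 1).
  assert (HPT : 0 < PI / T) by (apply Rdiv_lt_0_compat; [pose proof PI_gt3|]; lra).
  assert (Hg2 : 0 < gk a T k2).
  { unfold gk.
    assert (PI / T < sqrt (k2 ^ 2 - a ^ 2)).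
    { rewrite <- (sqrt_pow2 (PI / T)) by lra. apply sqrt_lt_1_alt. split. apply pow2_ge_0.
      unfold k2. rewrite <- (pow2_abs a). nra. }
    pose proof (acos_bound (a / k2)).
    assert (T * (PI / T) = PI) by (field; lra).
    nra. }
  destruct (Ranalysis5.IVT_interv (gk a T) k1 k2) as [z [Hz Hz0]].
  - intros c Hc. apply gk_cont. lra.
  - unfold k2. lra.
  - exact Hg1.
  - exact Hg2.
  - exists z. split. lra. unfold gk in Hz0. lra.
Qed.

Lemma ku_spec_ku a T : 0 < T -> a * T < 1 -> ku_spec a T (k_u a T).
Proof. intros. unfold k_u. apply epsilon_spec. apply ku_exists; auto. Qed.

Lemma stable a T k : 0 < T -> a * T < 1 -> a < k -> k < k_u a T -> forall w, 0 < Dg a T k w.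
Proof.
  intros HT HaT Hak Hku w.
  destruct (ku_spec_ku a T HT HaT) as [Hku1 Hku2].
  set (ku := k_u a T) in *.
  destruct (Rlt_dec 0 (Dg a T k w)) as [|Hn]; auto. exfalso.
  pose proof (Dg_nonneg a T k w). unfold Dg in *.
  pose proof (pow2_ge_0 (k * cos (T * w) - a)). pose proof (pow2_ge_0 (w - k * sin (T * w))).
  assert (HP : k * cos (T * w) = a) by nra.
  assert (HQ : w = k * sin (T * w)) by nra.
  assert (Hkk : k ^ 2 = a ^ 2 + w ^ 2).
  { pose proof (sin2_cos2 (T*w)). unfold Rsqr in H2. rewrite <- HP. rewrite HQ at 2. nra. }
  assert (Hw : w <> 0).
  { intros ->. rewrite Rmult_0_r, cos_0 in HP. lra. }
  assert (Hw2 : 0 < w ^ 2) by (apply pow2_gt_0; auto).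
  pose proof (Rabs_pos a).
  assert (Hka : Rabs a < k).
  { destruct (Rle_dec 0 a). rewrite Rabs_right; lra.
    rewrite Rabs_left by lra. destruct (Rle_dec k (-a)); [|lra]. nra. }
  assert (Hk0 : 0 < k) by lra.
  set (W := Rabs w).
  assert (HW : 0 < W) by (apply Rabs_pos_lt; auto).
  assert (HcW : cos (T * W) = a / k).
  { unfold W. unfold Rabs; destruct Rcase_abs.
    - replace (T * - w) with (- (T * w)) by ring. rewrite cos_neg. rewrite <- HP. field. lra.
    - rewrite <- HP. field. lra. }
  assert (HsW : sqrt (k ^ 2 - a ^ 2) = W).
  { rewrite Hkk. replace (a ^ 2 + w ^ 2 - a ^ 2) with (w ^ 2) by ring.
    rewrite <- (pow2_abs w). apply sqrt_pow2. lra. }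
  assert (Hg : 0 <= gk a T k).
  { unfold gk. rewrite HsW.
    pose proof (acos_bound (a / k)).
    destruct (Rle_dec (T * W) PI).
    - rewrite <- HcW. rewrite acos_cos. lra. split; [nra|lra].
    - lra. }
  pose proof (g_mono a T k ku HT HaT Hka Hku Hg).
  unfold gk in H3. lra.
Qed.

Lemma k_lt_ku a T k : 0 < T -> a * T < 1 -> Rabs a < k ->
  T * sqrt (k ^ 2 - a ^ 2) < acos (a / k) -> k < k_u a T.
Proof.
  intros HT HaT Hk Hg.
  destruct (ku_spec_ku a T HT HaT) as [Hku1 Hku2].
  destruct (Rlt_dec k (k_u a T)) as [|Hn]; auto. exfalso.
  destruct (Req_dec k (k_u a T)) as [E|E].
  - rewrite <- E in Hku2. lra.
  - assert (0 <= gk a T (k_u a T)) by (unfold gk; lra).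
    pose proof (g_mono a T (k_u a T) k HT HaT Hku1 ltac:(lra) H).
    unfold gk in H0. lra.
Qed.

Lemma loc_lt tau : 0 < tau -> locally 0 (fun T => T < tau).
Proof.
  intros H. exists (mkposreal tau H). intros y Hy. change (Rabs (y - 0) < tau) in Hy.
  unfold Rabs in Hy; destruct Rcase_abs; simpl in *; lra.
Qed.

Lemma aT_small a : exists tau, 0 < tau /\ forall T, 0 < T < tau -> a * T < 1.
Proof.
  exists (/ (Rabs a + 1)). split. apply Rinv_0_lt_compat. pose proof (Rabs_pos a); lra.
  intros T [H1 H2]. pose proof (Rabs_pos a).
  assert (T * (Rabs a + 1) < 1).
  { apply (Rmult_lt_compat_r (Rabs a + 1)) in H2; [|lra]. rewrite Rinv_l in H2 by lra. lra. }
  assert (a <= Rabs a) by apply RRle_abs. nra.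
Qed.

Lemma k0_facts a r : 0 < r ->
  let c0 := sqrt (a ^ 2 + / r) in
  c0 ^ 2 = a ^ 2 + / r /\ Rabs a < c0 /\ kopt0 a r = a + c0 /\ 0 < kopt0 a r.
Proof.
  intros Hr c0. pose proof (Rinv_0_lt_compat r Hr).
  assert (E : c0 ^ 2 = a ^ 2 + / r) by (apply pow2_sqrt; nra).
  assert (Rabs a < c0).
  { unfold c0. rewrite <- (sqrt_pow2 (Rabs a)) by apply Rabs_pos. apply sqrt_lt_1_alt.
    rewrite pow2_abs. split; [apply pow2_ge_0|lra]. }
  split; auto. split; auto. split; auto.
  unfold kopt0. fold c0. pose proof (RRle_abs (-a)). rewrite Rabs_Ropp in H1. lra.
Qed.

Lemma k0_lt_ku_eventually a r : 0 < r ->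
  exists tau, 0 < tau /\ forall T, 0 < T < tau -> a * T < 1 /\ kopt0 a r < k_u a T.
Proof.
  intros Hr. destruct (aT_small a) as [t1 [Ht1 H1]].
  destruct (k0_facts a r Hr) as [E [Hc [Ek Hk0]]].
  set (k0 := kopt0 a r) in *.
  destruct (Rlt_dec (Rabs a) k0) as [Hgt|Hle].
  - destruct (div_range a k0 Hgt).
    assert (Hac : 0 < acos (a / k0)) by (apply acos_bound_lt; lra).
    set (s := sqrt (k0 ^ 2 - a ^ 2)).
    assert (0 <= s) by apply sqrt_pos.
    exists (Rmin t1 (acos (a / k0) / (s + 1))). split.
    + apply Rmin_glb_lt; auto. apply Rdiv_lt_0_compat; lra.
    + intros T [HT HT2]. pose proof (Rmin_l t1 (acos (a / k0) / (s + 1))).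
      pose proof (Rmin_r t1 (acos (a / k0) / (s + 1))).
      assert (HaT : a * T < 1) by (apply H1; lra).
      split; auto. apply k_lt_ku; auto.
      assert (T * (s + 1) < acos (a / k0)).
      { assert (T < acos (a / k0) / (s + 1)) by lra.
        apply (Rmult_lt_compat_r (s + 1)) in H5; [|lra].
        replace (acos (a / k0) / (s + 1) * (s + 1)) with (acos (a / k0)) in H5 by (field; lra). lra. }
      fold s. nra.
  - exists t1. split; auto. intros T HT. assert (HaT : a * T < 1) by (apply H1; lra).
    split; auto. destruct (ku_spec_ku a T ltac:(lra) HaT). lra.
Qed.

Lemma J0_id a r c0 k : 0 < r -> 0 < c0 -> c0 ^ 2 = a ^ 2 + / r -> a < k ->
  PI * (1 + r * k ^ 2) / (k - a) =
  PI * (1 + r * (a + c0) ^ 2) / c0 + PI * r * (k - (a + c0)) ^ 2 / (k - a).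
Proof.
  intros Hr Hc E Hk.
  assert (E2 : r * c0 ^ 2 = 1 + r * a ^ 2) by (rewrite E; field; lra).
  field_simplify_eq; [|lra].
  assert (E3 : r * c0 ^ 2 - r * a ^ 2 - 1 = 0) by lra.
  assert (H : PI * r * k * a^2 - PI*r*k*c0^2 - PI*r*a^3 - PI*r*a^2*c0 + PI*r*a*c0^2
              + PI*r*c0^3 + PI*k - PI*a - PI*c0 = 0).
  { replace (PI * r * k * a^2 - PI*r*k*c0^2 - PI*r*a^3 - PI*r*a^2*c0 + PI*r*a*c0^2
              + PI*r*c0^3 + PI*k - PI*a - PI*c0) with (PI * (r * c0 ^ 2 - r * a ^ 2 - 1) * (a + c0 - k)) by ring.
    rewrite E3. ring. }
  lra.
Qed.

Lemma lower1 a r T k K : 0 < r -> 0 <= T -> a < k -> Rabs k <= K ->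
  (forall w, 0 < Dg a T k w) ->
  PI * (1 + r * k ^ 2) / (k - a) / (1 + K * T) ^ 2 <= J_T a r T k.
Proof.
  intros Hr HT Hk HK Hpos. unfold J_T.
  pose proof (f_lower1 a T k HT Hk Hpos).
  pose proof (Rabs_pos k).
  assert (0 < 1 + r * k ^ 2) by (pose proof (pow2_ge_0 k); nra).
  assert (Hm : (1 + Rabs k * T) ^ 2 <= (1 + K * T) ^ 2).
  { apply pow_incr. split. nra. nra. }
  assert (0 < (1 + Rabs k * T) ^ 2) by nra.
  assert (PI / ((1 + K * T) ^ 2 * (k - a)) <= PI / ((1 + Rabs k * T) ^ 2 * (k - a))).
  { unfold Rdiv. apply Rmult_le_compat_l. pose proof PI_gt3; lra.
    apply Rinv_le_contravar. nra. apply Rmult_le_compat_r; lra. }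
  replace (PI * (1 + r * k ^ 2) / (k - a) / (1 + K * T) ^ 2) with
    ((1 + r * k ^ 2) * (PI / ((1 + K * T) ^ 2 * (k - a)))) by (field; split; nra).
  apply Rmult_le_compat_l; lra.
Qed.

Lemma lower2 a r T k : 0 < r -> 0 <= T -> a < k -> Rabs a <= k ->
  (forall w, 0 < Dg a T k w) ->
  PI * r * k / 6 <= J_T a r T k.
Proof.
  intros Hr HT Hk Hak Hpos. unfold J_T.
  pose proof (f_lower2 a T k HT Hk Hpos).
  pose proof (Rabs_pos a).
  assert (Hna : -a <= Rabs a) by (pose proof (RRle_abs (-a)); rewrite Rabs_Ropp in *; lra).
  assert (Hk0 : 0 < k) by lra.
  assert (Hs : sqrt ((k - a) ^ 2 + 4 * k ^ 2) <= 3 * k).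
  { rewrite <- (sqrt_pow2 (3 * k)) by lra. apply sqrt_le_1_alt.
    assert ((k - a) ^ 2 <= 4 * k ^ 2).
    { assert (-k <= a) by lra. nra. }
    nra. }
  assert (Hs0 : 0 < sqrt ((k - a) ^ 2 + 4 * k ^ 2)) by (apply sqrt_lt_R0; nra).
  assert (PI / (2 * (3 * k)) <= PI / (2 * sqrt ((k - a) ^ 2 + 4 * k ^ 2))).
  { unfold Rdiv. apply Rmult_le_compat_l. pose proof PI_gt3; lra.
    apply Rinv_le_contravar; lra. }
  assert (PI * r * k / 6 <= (1 + r * k ^ 2) * (PI / (2 * (3 * k)))).
  { replace ((1 + r * k ^ 2) * (PI / (2 * (3 * k)))) with (PI / (6 * k) + PI * r * k / 6) by (field; lra).
    assert (0 < PI / (6 * k)) by (apply Rdiv_lt_0_compat; pose proof PI_gt3; lra). lra. }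
  assert (0 < 1 + r * k ^ 2) by (pose proof (pow2_ge_0 k); nra).
  apply Rle_trans with ((1 + r * k ^ 2) * (PI / (2 * (3 * k)))); auto.
  apply Rmult_le_compat_l; lra.
Qed.

Lemma upper0 a r T k : 0 < r -> 0 <= T -> a < k -> 0 < k -> k * T < 1 ->
  J_T a r T k <= PI * (1 + r * k ^ 2) / (k - a) / (1 - k * T) ^ 2.
Proof.
  intros Hr HT Hk Hk0 HkT. unfold J_T.
  pose proof (f_upper a T k HT Hk ltac:(rewrite Rabs_right; lra)).
  rewrite Rabs_right in H by lra.
  assert (0 < 1 + r * k ^ 2) by (pose proof (pow2_ge_0 k); nra).
  replace (PI * (1 + r * k ^ 2) / (k - a) / (1 - k * T) ^ 2) with
    ((1 + r * k ^ 2) * (PI / ((1 - k * T) ^ 2 * (k - a)))) by (field; split; nra).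
  apply Rmult_le_compat_l; lra.
Qed.

Lemma kopt_conv (a r : R) (hr : 0 < r) (kopt : R -> R)
  (hkopt : forall T, 0 < T -> a * T < 1 ->
     a < kopt T < k_u a T /\
     (forall k, a < k < k_u a T -> J_T a r T (kopt T) <= J_T a r T k)) :
  filterlim kopt (at_right 0) (locally (kopt0 a r)).
Proof.
  intros P [eps HP].
  destruct (k0_facts a r hr) as [E [Hc [Ek Hk0]]].
  set (c0 := sqrt (a ^ 2 + / r)) in *. set (k0 := kopt0 a r) in *.
  pose proof (Rabs_pos a) as Ha0.
  assert (Hna : -a <= Rabs a) by (pose proof (RRle_abs (-a)); rewrite Rabs_Ropp in *; lra).
  assert (Hc0 : 0 < c0) by lra.
  assert (HPI : 0 < PI) by (pose proof PI_gt3; lra).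
  set (Jk0 := PI * (1 + r * k0 ^ 2) / c0).
  assert (HJ0 : 0 < Jk0).
  { unfold Jk0. apply Rdiv_lt_0_compat; auto. apply Rmult_lt_0_compat; auto. pose proof (pow2_ge_0 k0). nra. }
  assert (HQ : 0 <= 24 * Jk0 / (PI * r)).
  { left. apply Rdiv_lt_0_compat; nra. }
  set (K := Rabs a + k0 + 1 + 24 * Jk0 / (PI * r)).
  assert (HKa : 0 < K - a) by (unfold K; lra).
  assert (Heps : 0 < eps) by apply cond_pos.
  set (eta := PI * r * eps ^ 2 / (K - a)).
  assert (Heta : 0 < eta).
  { unfold eta. apply Rdiv_lt_0_compat; auto. apply Rmult_lt_0_compat; [apply Rmult_lt_0_compat; auto|]. apply pow_lt; lra. }
  set (phi := fun T => (1 + K * T) ^ 2 * Jk0 / (1 - k0 * T) ^ 2).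
  assert (Hphi : locally 0 (fun T => phi T < Jk0 + eta)).
  { assert (Hcont : continuous phi 0).
    { apply (ex_derive_continuous (K:=R_AbsRing) (V:=R_NormedModule)). unfold phi.
      auto_derive. replace (1 - k0 * 0) with 1 by ring. lra. }
    assert (Hp0 : phi 0 = Jk0) by (unfold phi; field).
    assert (Hloc : locally (phi 0) (fun v => v < Jk0 + eta)).
    { rewrite Hp0. exists (mkposreal eta Heta). intros y Hy.
      change (Rabs (y - Jk0) < eta) in Hy. unfold Rabs in Hy; destruct Rcase_abs; simpl in *; lra. }
    exact (Hcont _ Hloc). }
  destruct (k0_lt_ku_eventually a r hr) as [tau [Htau Hku]]. fold k0 in Hku.
  assert (Ht3 : 0 < / (2 * k0)) by (apply Rinv_0_lt_compat; lra).
  pose proof (filter_and _ _ (filter_and _ _ (loc_lt tau Htau) (loc_lt _ Ht3)) Hphi) as Hall.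
  unfold at_right, within. simpl.
  refine (filter_imp _ _ _ Hall). intros T [[HT1 HT2] HT3] HT0. simpl in HT1, HT2, HT3.
  apply HP. change (Rabs (kopt T - k0) < eps).
  destruct (Hku T (conj HT0 HT1)) as [HaT Hk0ku].
  destruct (hkopt T HT0 HaT) as [[Hk1 Hk2] Hmin].
  set (k := kopt T) in *.
  pose proof (stable a T k HT0 HaT Hk1 Hk2) as Hpos.
  assert (Hak0 : a < k0) by lra.
  pose proof (Hmin k0 (conj Hak0 Hk0ku)) as HJ.
  assert (Hk0T : k0 * T <= / 2).
  { apply (Rmult_lt_compat_l (2 * k0)) in HT2; [|lra]. rewrite Rinv_r in HT2 by lra. lra. }
  pose proof (upper0 a r T k0 hr ltac:(lra) Hak0 Hk0 ltac:(lra)) as Hup.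
  replace (k0 - a) with c0 in Hup by lra. fold Jk0 in Hup.
  assert (Hden : 0 < (1 - k0 * T) ^ 2) by nra.
  assert (Hup4 : Jk0 / (1 - k0 * T) ^ 2 <= 4 * Jk0).
  { apply (Rmult_le_reg_r ((1 - k0 * T) ^ 2)); auto. unfold Rdiv.
    rewrite Rmult_assoc, Rinv_l by lra.
    assert (Hq : 1 / 4 <= (1 - k0 * T) ^ 2).
    { assert (0 <= k0 * T) by nra. nra. }
    assert (0 <= Jk0 * (4 * (1 - k0 * T) ^ 2 - 1)) by (apply Rmult_le_pos; lra). lra. }
  apply Rnot_le_lt. intros Hge.
  destruct (Rle_dec k K) as [HkK|HkK].
  - assert (HkabsK : Rabs k <= K) by (unfold Rabs; destruct Rcase_abs; unfold K in *; lra).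
    pose proof (lower1 a r T k K hr ltac:(lra) Hk1 HkabsK Hpos) as Hl.
    pose proof (J0_id a r c0 k hr Hc0 E Hk1) as Hid.
    replace (a + c0) with k0 in Hid by lra. fold Jk0 in Hid.
    assert (Hsq : eps ^ 2 <= (k - k0) ^ 2).
    { rewrite <- (pow2_abs (k - k0)). apply pow_incr. lra. }
    assert (Heta2 : eta <= PI * r * (k - k0) ^ 2 / (k - a)).
    { unfold eta, Rdiv. apply Rmult_le_compat.
      - pose proof (pow2_ge_0 eps). apply Rmult_le_pos; [|lra]. apply Rmult_le_pos; lra.
      - left. apply Rinv_0_lt_compat. lra.
      - apply Rmult_le_compat_l; [apply Rmult_le_pos|]; lra.
      - apply Rinv_le_contravar; lra. }
    assert (HK1 : 0 < (1 + K * T) ^ 2).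
    { assert (0 < K) by (unfold K; lra). apply pow_lt. assert (0 < K * T) by (apply Rmult_lt_0_compat; lra). lra. }
    assert (HKT : 0 < 1 + K * T).
    { assert (0 < K) by (unfold K; lra). assert (0 < K * T) by (apply Rmult_lt_0_compat; lra). lra. }
    assert (Hmul : PI * (1 + r * k ^ 2) / (k - a) <= (1 + K * T) ^ 2 * J_T a r T k).
    { apply (Rmult_le_compat_l ((1 + K * T) ^ 2)) in Hl; [|lra].
      replace ((1 + K * T) ^ 2 * (PI * (1 + r * k ^ 2) / (k - a) / (1 + K * T) ^ 2))
        with (PI * (1 + r * k ^ 2) / (k - a)) in Hl by (field; repeat split; lra). exact Hl. }
    assert (Hchain : (1 + K * T) ^ 2 * J_T a r T k <= phi T).
    { unfold phi. apply Rle_trans with ((1 + K * T) ^ 2 * (Jk0 / (1 - k0 * T) ^ 2)).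
      apply Rmult_le_compat_l; lra. right. field. lra. }
    lra.
  - assert (HkK' : K < k) by lra.
    pose proof (lower2 a r T k hr ltac:(lra) Hk1 ltac:(unfold K in *; lra) Hpos) as Hl.
    assert (PI * r * K / 6 >= 4 * Jk0).
    { unfold K. replace (PI * r * (Rabs a + k0 + 1 + 24 * Jk0 / (PI * r)) / 6)
        with (PI * r * (Rabs a + k0 + 1) / 6 + 4 * Jk0) by (field; split; lra).
      assert (0 <= PI * r * (Rabs a + k0 + 1) / 6).
      { apply Rmult_le_pos; [|lra]. apply Rmult_le_pos; nra. }
      lra. }
    assert (PI * r * K / 6 < PI * r * k / 6).
    { unfold Rdiv. apply Rmult_lt_compat_r. lra. apply Rmult_lt_compat_l; nra. }
    lra.
Qed.

Theorem proposition5 (a r : R) (hr : 0 < r) (kopt : R -> R)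
  (hkopt : forall T, 0 < T -> a * T < 1 ->
     a < kopt T < k_u a T /\
     (forall k, a < k < k_u a T -> J_T a r T (kopt T) <= J_T a r T k)) :
  filterlim
    (fun T => kopt T / (kopt0 a r - (a * kopt0 a r + / r) * T))
    (at_right 0) (locally 1).
Proof.
  destruct (k0_facts a r hr) as [_ [_ [_ Hk0]]].
  set (k0 := kopt0 a r) in *.
  set (b := a * k0 + / r).
  apply (filterlim_comp_2 (G:=locally k0) (H:=locally (/ k0)) kopt (fun T => / (k0 - b * T)) Rmult).
  - apply kopt_conv; auto.
  - apply (filterlim_filter_le_1 _ (filter_le_within _)).
    assert (Hc : continuous (fun T => / (k0 - b * T)) 0).
    { apply (ex_derive_continuous (K:=R_AbsRing) (V:=R_NormedModule)). auto_derive. lra. }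
    replace (/ k0) with (/ (k0 - b * 0)) by (f_equal; ring). exact Hc.
  - pose proof (filterlim_mult (K:=R_AbsRing) k0 (/ k0)) as H.
    replace 1 with (mult k0 (/ k0)). exact H.
    unfold mult; simpl. field. lra.
Qed.
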